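(* For every approval-based participatory budgeting instance $I=(N,\mathcal{T},B,\mathrm{cost},\mathcal{A})$ and every nonempty $T\subseteq\mathcal{T}$, the proportionality degree of the sequential Phragmén rule satisfies \[ d_{\mathrm{Phrag}}(T)\;\ge\;\frac{1}{2}\left(\frac{\mathrm{cost}(T)}{\max_{t\in T}\mathrm{cost}(t)}-1\right). \]
   Context: An approval-based PB instance is $I=(N,\mathcal{T},B,\mathrm{cost},\mathcal{A})$: $N$ is a set of $n$ voters, $\mathcal{T}$ a finite set of projects, $B>0$ a budget, $\mathrm{cost}:\mathcal{T}\to\mathbb{R}_{>0}$, with $\mathrm{cost}(S)=\sum_{t\in S}\mathrm{cost}(t)$, and $A_i\subseteq\mathcal{T}$ the projects approved by voter $i$. For $T\subseteq\mathcal{T}$, $V\subseteq N$ is $T$-cohesive if $T\subseteq\bigcap_{i\in V}A_i$ and $\mathrm{cost}(T)/B\le|V|/n$; $\mathcal{V}(T)$ is the set of all $T$-cohesive groups. $\mathrm{avg}_W(V)=\frac{1}{|V|}\sum_{i\in V}|W\cap A_i|$. For a rule $f$, $d_f(T)=\sup\{g:\ \min_{V\in\mathcal{V}(T)}\mathrm{avg}_{f(I)}(V)\ge\min(|T|,g)\}$. Sequential Phragmén rule: start with an empty proposal $W$. Every voter earns credits continuously at rate one unit of credit per unit of time. At the first moment when some not-yet-selected project $p$ is such that the voters approving $p$ together hold $\mathrm{cost}(p)$ credits, $p$ is added to $W$ and the balances of all voters approving $p$ are reset to $0$ (other voters keep their credits); ties broken arbitrarily. The rule stops when the project it would select next would make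 the total cost of $W$ exceed $B$, and returns $W$. *)

(* Defs.v *)
From HB Require Import structures.
From mathcomp Require Import all_boot all_order all_algebra.
Set Implicit Arguments. Unset Strict Implicit. Unset Printing Implicit Defensive.
Import Order.TTheory GRing.Theory Num.Theory.
Local Open Scope ring_scope.

Section PB.
Variables (R : realFieldType) (Voter Proj : finType).
Variables (B : R) (cost : Proj -> R) (A : Voter -> {set Proj}).

Definition costS (S : {set Proj}) : R := \sum_(t in S) cost t.

Definition support_credit (b : Voter -> R) (p : Proj) : R :=
  \sum_(i | p \in A i) b i.

(* One step of sequential Phragmen from state (W, b): after time t >= 0
   (every voter has earned t more credits), t is the FIRST moment at which
   the supporters of the unselected project p hold cost(p) credits. *)
Definition phrag_step (W : {set Proj}) (b : Voter -> R) (p : Proj) (t : R) : Prop :=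
  [/\ p \notin W, 0 <= t,
      support_credit (fun i => b i + t) p = cost p &
      forall (t' : R) (q : Proj), 0 <= t' -> t' < t -> q \notin W ->
        support_credit (fun i => b i + t') q < cost q].

Definition phrag_update (b : Voter -> R) (p : Proj) (t : R) : Voter -> R :=
  fun i => if p \in A i then 0 else b i + t.

(* States reachable by the rule (with arbitrary tie-breaking); a step is
   performed only if the selected project keeps the total cost within B. *)
Inductive phrag_reach : {set Proj} -> (Voter -> R) -> Prop :=
| phrag_init : phrag_reach set0 (fun _ => 0)
| phrag_next W b p t :
    phrag_reach W b -> phrag_step W b p t -> costS (p |: W) <= B ->
    phrag_reach (p |: W) (phrag_update b p t).

Definition phragmen_outcome (W : {set Proj}) : Prop :=
  exists b, phrag_reach W b /\
    ((exists p t, phrag_step W b p t /\ B < costS (p |: W)) \/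
     (forall p t, ~ phrag_step W b p t)).

Definition cohesive (T : {set Proj}) (V : {set Voter}) : Prop :=
  (forall i, i \in V -> T \subset A i) /\
  costS T / B <= #|V|%:R / #|Voter|%:R.

Definition avg (W : {set Proj}) (V : {set Voter}) : R :=
  (#|V|%:R)^-1 * \sum_(i in V) #|W :&: A i|%:R.

Definition pd_cond (W T : {set Proj}) (g : R) : Prop :=
  forall V : {set Voter}, cohesive T V -> Num.min (#|T|%:R) g <= avg W V.

(* d(T) >= x, where d(T) = sup { g | pd_cond W T g } (sup in the extended
   reals): every g < x is exceeded by some element of the set. *)
Definition prop_degree_ge (W T : {set Proj}) (x : R) : Prop :=
  forall g : R, g < x -> exists g' : R, g < g' /\ pd_cond W T g'.

(* max_{t in T} cost(t) (costs are positive, so 0 is a neutral start) *)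
Definition max_cost (T : {set Proj}) : R := \big[Num.max/0]_(t in T) cost t.

End PB.

(* Main.v *)
Require Import Defs.
From HB Require Import structures.
From mathcomp Require Import all_boot all_order all_algebra.
From mathcomp Require Import ring lra.
Import Order.TTheory GRing.Theory Num.Theory.
Set Implicit Arguments. Unset Strict Implicit.
Local Open Scope ring_scope.

Definition Gv (R : realFieldType) (Voter : finType) (V : {set Voter}) (a : Voter -> R) : R :=
  \sum_(i in V) \sum_(j in V) Num.min (a i) (a j).
Definition Kv (R : realFieldType) (Voter Proj : finType) (A : Voter -> {set Proj})
  (W : {set Proj}) (V : {set Voter}) : R := \sum_(i in V) (#|W :&: A i|)%:R.
Definition mq (R : realFieldType) (Voter Proj : finType) (A : Voter -> {set Proj}) (q : Proj) : R :=
  \sum_(i | q \in A i) 1.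

Lemma min_shift (R : realFieldType) (x y t : R) : Num.min (x + t) (y + t) = Num.min x y + t.
Proof.
have [h|h] := leP x y.
  by rewrite !min_l // lerD2r.
by rewrite !min_r // ?lerD2r ltW.
Qed.

Lemma credit_shift (R : realFieldType) (Voter Proj : finType) (A : Voter -> {set Proj})
  (b : Voter -> R) (t : R) (q : Proj) :
  support_credit A (fun i => b i + t) q = support_credit A b q + t * mq R A q.
Proof.
rewrite /support_credit big_split /=; congr (_ + _).
by rewrite /mq mulr_sumr; apply: eq_bigr => i _; rewrite mulr1.
Qed.

Lemma mq_ge0 (R : realFieldType) (Voter Proj : finType) (A : Voter -> {set Proj}) q :
  0 <= mq R A q.
Proof. by apply: sumr_ge0 => i _; exact: ler01. Qed.

Lemma G_shift (R : realFieldType) (Voter : finType) (V : {set Voter}) (a : Voter -> R) t :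
  Gv V (fun i => a i + t) = Gv V a + (#|V|%:R * (#|V|%:R * t)).
Proof.
rewrite /Gv.
transitivity (\sum_(i in V) (\sum_(j in V) Num.min (a i) (a j) + #|V|%:R * t)).
  apply: eq_bigr => i _; rewrite mulr_natl -sumr_const -big_split /=.
  by apply: eq_bigr => j _; rewrite min_shift.
rewrite big_split /= sumr_const; congr (_ + _).
by rewrite !mulr_natl.
Qed.

Lemma G_le (R : realFieldType) (Voter : finType) (V : {set Voter}) (a : Voter -> R) :
  Gv V a <= #|V|%:R * \sum_(j in V) a j.
Proof.
rewrite /Gv mulr_natl -sumr_const; apply: ler_sum => i _.
by apply: ler_sum => j _; rewrite ge_min lexx orbT.
Qed.

Lemma step_min (R : realFieldType) (x y : R) (pi pj : bool) : 0 <= x -> 0 <= y ->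
  Num.min x y <= Num.min (if pi then 0 else x) (if pj then 0 else y) + pi%:R * y + pj%:R * x.
Proof.
move=> x0 y0.
have m1 : Num.min x y <= y by rewrite ge_min lexx orbT.
have m2 : Num.min x y <= x by rewrite ge_min lexx.
have z1 : Num.min 0 y = 0 by rewrite min_l.
have z2 : Num.min x 0 = 0 by rewrite min_r.
have z3 : Num.min 0 0 = 0 :> R by rewrite min_l.
case: pi; case: pj => /=; rewrite ?mul1r ?mul0r ?addr0 ?add0r ?z1 ?z2 ?z3; lra.
Qed.

Lemma G_reset (R : realFieldType) (Voter : finType) (V : {set Voter}) (a : Voter -> R)
  (P : pred Voter) : (forall i, 0 <= a i) ->
  Gv V a <= Gv V (fun i => if P i then 0 else a i)
     + 2 * (\sum_(i in V) (P i)%:R) * \sum_(j in V) a j.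
Proof.
move=> a0; rewrite /Gv.
have step : forall i j, Num.min (a i) (a j) <=
   Num.min (if P i then 0 else a i) (if P j then 0 else a j) + (P i)%:R * a j + (P j)%:R * a i.
  by move=> i j; apply: step_min.
apply: le_trans (ler_sum _ (fun i _ => ler_sum _ (fun j _ => step i j))) _.
rewrite le_eqVlt; apply/orP; left; apply/eqP.
have e1 : \sum_(i in V) \sum_(j in V) (P i)%:R * a j
   = (\sum_(i in V) (P i)%:R) * \sum_(j in V) a j.
  by rewrite mulr_suml; apply: eq_bigr => i _; rewrite mulr_sumr.
have e2 : \sum_(i in V) \sum_(j in V) (P j)%:R * a i
   = (\sum_(i in V) (P i)%:R) * \sum_(j in V) a j.
  rewrite mulrC mulr_suml; apply: eq_bigr => i _.
  by rewrite mulr_sumr; apply: eq_bigr => j _; rewrite mulrC.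
under eq_bigr => i _ do rewrite !big_split /=.
rewrite !big_split /= e1 e2; ring.
Qed.

Lemma card_setU1I (Proj : finType) (p : Proj) (W X : {set Proj}) :
  p \notin W -> #|(p |: W) :&: X| = ((p \in X) + #|W :&: X|)%N.
Proof.
move=> pW; case: (boolP (p \in X)) => h.
  have -> : (p |: W) :&: X = p |: (W :&: X).
    by apply/setP => x; rewrite !inE; case: (eqVneq x p) => // ->; rewrite h.
  by rewrite cardsU1 inE (negbTE pW).
have -> : (p |: W) :&: X = W :&: X.
  by apply/setP => x; rewrite !inE; case: (eqVneq x p) => // ->; rewrite (negbTE h) !andbF.
by [].
Qed.

Lemma Kv_add (R : realFieldType) (Voter Proj : finType) (A : Voter -> {set Proj})
  (p : Proj) (W : {set Proj}) (V : {set Voter}) : p \notin W ->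
  Kv R A (p |: W) V = Kv R A W V + \sum_(i in V) (p \in A i)%:R.
Proof.
move=> pW; rewrite /Kv -big_split /=; apply: eq_bigr => i _.
by rewrite card_setU1I // natrD addrC.
Qed.

Lemma sum_sub (R : realFieldType) (Voter : finType) (P Q : pred Voter) (a : Voter -> R) :
  (forall i, 0 <= a i) -> (forall i, P i -> Q i) ->
  \sum_(i | P i) a i <= \sum_(i | Q i) a i.
Proof.
move=> a0 PQ; rewrite [X in _ <= X](bigID P) /=.
have -> : \sum_(i | Q i && P i) a i = \sum_(i | P i) a i.
  apply: eq_bigl => i; case: (boolP (P i)) => h; rewrite ?andbT ?andbF //.
  exact: PQ.
by rewrite lerDl; apply: sumr_ge0.
Qed.

Lemma step_bound (R : realFieldType) (Voter Proj : finType) (cost : Proj -> R)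
  (A : Voter -> {set Proj}) (W : {set Proj}) (b : Voter -> R) (p : Proj) (t : R) (q : Proj) :
  (forall q, q \notin W -> support_credit A b q <= cost q) ->
  phrag_step cost A W b p t -> q \notin W ->
  support_credit A (fun i => b i + t) q <= cost q.
Proof.
move=> hc [pW t0 eq hmin] qW; rewrite credit_shift.
set c := support_credit A b q; set m := mq R A q.
have m0 : 0 <= m := mq_ge0 R A q.
rewrite leNgt; apply/negP => hlt.
have [tz|tp] := eqVneq t 0.
  by have := hc q qW; rewrite -/c; move: hlt; rewrite tz mul0r addr0; lra.
have tpos : 0 < t by rewrite lt_def tp t0.
set d := c + t * m - cost q.
have dpos : 0 < d by rewrite /d; lra.
set e := Num.min t (d / (m + 1)).
have m1 : 0 < m + 1 by lra.
have e0 : 0 < e by rewrite lt_min tpos divr_gt0.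
have et : e <= t by rewrite ge_min lexx.
have ed : e * (m + 1) <= d.
  by rewrite -ler_pdivlMr // ge_min lexx orbT.
have := hmin (t - e) q _ _ qW; rewrite credit_shift -/c -/m.
have E1 : (t - e) * m = t * m - e * m by ring.
have E2 : e * (m + 1) = e * m + e by ring.
rewrite E1; move: ed; rewrite E2 /d => ed.
move=> H; have : c + (t * m - e * m) < cost q by apply: H; lra.
lra.
Qed.

Definition Inv (R : realFieldType) (Voter Proj : finType) (cost : Proj -> R)
  (A : Voter -> {set Proj}) (W : {set Proj}) (b : Voter -> R) : Prop :=
  exists s : R, [/\ 0 <= s, (forall i, 0 <= b i),
    (forall q, q \notin W -> support_credit A b q <= cost q),
    \sum_i b i + costS cost W = #|Voter|%:R * s &
    forall (V : {set Voter}) q, q \notin W -> (forall i, i \in V -> q \in A i) ->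
      #|V|%:R * (#|V|%:R * s) <= 2 * cost q * Kv R A W V + Gv V b].

Lemma sum_all_const (R : realFieldType) (Voter : finType) (t : R) :
  \sum_(i : Voter) t = #|Voter|%:R * t.
Proof. by rewrite sumr_const mulr_natl. Qed.

Lemma reach_inv (R : realFieldType) (Voter Proj : finType) (B : R) (cost : Proj -> R)
  (A : Voter -> {set Proj}) (hcost : forall p, 0 < cost p) W b :
  phrag_reach B cost A W b -> Inv cost A W b.
Proof.
elim => [|{}W {}b p t _ [s [s0 b0 hc hsum hG]] hst _].
  exists 0; split => //.
  - move=> q _; rewrite /support_credit big1 //; exact: ltW.
  - by rewrite big1 // /costS big_set0 addr0 mulr0.
  - move=> V q _ _; rewrite !mulr0; apply: addr_ge0.
      apply: mulr_ge0; first by apply: mulr_ge0 => //; exact: ltW.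
      by apply: sumr_ge0 => i _; exact: ler0n.
    by apply: sumr_ge0 => i _; apply: sumr_ge0 => j _; rewrite min_l.
have [pW t0 heq hmin] := hst.
exists (s + t); split.
- lra.
- by move=> i; rewrite /phrag_update; case: (p \in A i) => //; apply: addr_ge0.
- move=> q; rewrite in_setU1 negb_or => /andP [qp qW].
  apply: le_trans (step_bound hc hst qW).
  apply: ler_sum => i _; rewrite /phrag_update; case: (p \in A i) => //.
  by apply: addr_ge0.
- rewrite /costS big_setU1 //= -/(costS cost W).
  have E1 : \sum_i b i + #|Voter|%:R * t = \sum_i (b i + t).
    by rewrite big_split /= sum_all_const.
  have E2 : \sum_i (b i + t) = support_credit A (fun i => b i + t) p +
      \sum_(i | p \notin A i) (b i + t) by rewrite (bigID (fun i => p \in A i)).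
  have E3 : \sum_i phrag_update A b p t i = \sum_(i | p \notin A i) (b i + t).
    rewrite (bigID (fun i => p \in A i)) /= big1 ?add0r.
      by apply: eq_bigr => i /negbTE h; rewrite /phrag_update h.
    by move=> i h; rewrite /phrag_update h.
  rewrite E3; move: E1 E2; rewrite heq; lra.
- move=> V q; rewrite in_setU1 negb_or => /andP [qp qW] qV.
  have IH := hG V q qW qV.
  set a := fun i => b i + t.
  have a0 : forall i, 0 <= a i by move=> i; rewrite /a; apply: addr_ge0.
  have HS := G_shift V b t.
  have HR := G_reset V (fun i => p \in A i) a0.
  have HSV : \sum_(j in V) a j <= cost q.
    apply: le_trans (step_bound hc hst qW).
    by apply: sum_sub => // i; apply: qV.
  set cnt := \sum_(i in V) (p \in A i)%:R in HR.
  have cnt0 : 0 <= cnt by apply: sumr_ge0 => i _; exact: ler0n.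
  have HM : 2 * cnt * \sum_(j in V) a j <= 2 * cnt * cost q.
    by apply: ler_wpM2l => //; apply: mulr_ge0 => //; lra.
  rewrite Kv_add //; rewrite -/cnt.
  have -> : phrag_update A b p t = (fun i => if p \in A i then 0 else a i) by [].
  move: IH HS HR HM.
  set v := #|V|%:R; set G0 := Gv V b; set G1 := Gv V (fun i => if p \in A i then 0 else a i).
  set K := Kv R A W V; set S := \sum_(j in V) a j.
  rewrite /a -/(Gv V (fun i => b i + t)) => IH HS HR HM.
  have E : v * (v * (s + t)) = v * (v * s) + v * (v * t) by ring.
  have E' : 2 * cost q * (K + cnt) = 2 * cost q * K + 2 * cnt * cost q by ring.
  rewrite E E'; lra.
Qed.

Lemma mq_pos (R : realFieldType) (Voter Proj : finType) (A : Voter -> {set Proj}) q i :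
  q \in A i -> 0 < mq R A q.
Proof.
move=> h; rewrite /mq (bigD1 i) //=.
have : 0 <= \sum_(j | (q \in A j) && (j != i)) (1 : R) by apply: sumr_ge0 => j _; exact: ler01.
lra.
Qed.

Lemma exists_step (R : realFieldType) (Voter Proj : finType) (cost : Proj -> R)
  (A : Voter -> {set Proj}) (hcost : forall p, 0 < cost p) (W : {set Proj}) (b : Voter -> R)
  (q0 : Proj) (i0 : Voter) :
  (forall q, q \notin W -> support_credit A b q <= cost q) ->
  q0 \notin W -> q0 \in A i0 -> exists p t, phrag_step cost A W b p t.
Proof.
move=> hc q0W q0i.
pose Q := [pred q | (q \notin W) && (0 < mq R A q)].
pose F := fun q => (cost q - support_credit A b q) / mq R A q.
have Qq0 : Q q0 by rewrite /Q /= q0W (@mq_pos R _ _ A q0 i0 q0i).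
case: (arg_minP F Qq0) => p /andP [pW mp] hmin.
exists p, (F p); split => //.
- by apply: divr_ge0; [rewrite subr_ge0; exact: hc | exact: ltW].
- by rewrite credit_shift /F divfK ?gt_eqF //; lra.
- move=> t' q t'0 t'lt qW; rewrite credit_shift.
  case: (boolP (0 < mq R A q)) => mq0.
    have Fq : F p <= F q by apply: hmin; rewrite /Q /= qW.
    have : t' * mq R A q < F q * mq R A q.
      by rewrite ltr_pM2r //; apply: lt_le_trans Fq.
    by rewrite /F divfK ?gt_eqF //; lra.
  have cz : support_credit A b q = 0.
    apply: big1 => i hi; by rewrite (@mq_pos R _ _ A q i hi) in mq0.
  have mz : mq R A q = 0.
    by apply/eqP; rewrite eq_le mq_ge0 andbT leNgt.
  by rewrite cz mz mulr0 addr0.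
Qed.
Unset Implicit Arguments. Set Strict Implicit.

Theorem theorem4 (R : realFieldType) (Voter Proj : finType)
  (B : R) (cost : Proj -> R) (A : Voter -> {set Proj})
  (hB : 0 < B) (hcost : forall p, 0 < cost p)
  (W : {set Proj}) (hW : phragmen_outcome B cost A W)
  (T : {set Proj}) (hT : T != set0) :
  prop_degree_ge B cost A W T
    (2^-1 * (costS cost T / max_cost cost T - 1)).
Proof.
move=> g hg.
set d := max_cost cost T; set C := costS cost T.
set x := 2^-1 * (C / d - 1).
exists x; split => //.
move=> V [hVT hcoh].
have [t1 t1T] := set0Pn _ hT.
have cge : forall t, t \in T -> cost t <= C.
  move=> t tT; rewrite /C /costS (bigD1 t) //=.
  have : 0 <= \sum_(i in T | i != t) cost i by apply: sumr_ge0 => i _; exact: ltW.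
  lra.
have Cpos : 0 < C by apply: lt_le_trans (hcost t1) (cge t1 t1T).
have dge : forall t, t \in T -> cost t <= d.
  move=> t tT; rewrite /d /max_cost (bigD1 t) //= le_max lexx //.
set v := (#|V|%:R : R); set n := (#|Voter|%:R : R).
have vpos : 0 < v.
  rewrite /v ltr0n lt0n; apply/negP => /eqP v0.
  move: hcoh; rewrite /v v0 mul0r => h.
  have : 0 < C / B by apply: divr_gt0.
  rewrite -/C in h; lra.
have npos : 0 < n.
  by apply: lt_le_trans vpos _; rewrite /v /n ler_nat max_card.
have [TW|] := boolP (T \subset W).
  rewrite ge_min; apply/orP; left.
  rewrite /avg ler_pdivlMl // -/v /v mulr_natl -sumr_const.
  apply: ler_sum => i iV; rewrite ler_nat; apply: subset_leq_card.
  by rewrite subsetI TW hVT.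
case/subsetPn => t0 t0T t0W.
have [i0 i0V] : exists i0, i0 \in V.
  apply/set0Pn; apply/negP => /eqP V0; move: vpos; rewrite /v V0 cards0; lra.
have t0i : forall i, i \in V -> t0 \in A i by move=> i iV; exact: (subsetP (hVT i iV)).
have [b [hr hcase]] := hW.
have [s [s0 b0 hc hsum hG]] := reach_inv hcost hr.
case: hcase => [[p [tau [hst hBp]]]|hno]; last first.
  have [p [t hst]] := exists_step hcost hc t0W (t0i i0 i0V).
  by case: (hno p t hst).
have [pW tau0 heq _] := hst.
rewrite ge_min; apply/orP; right; apply: ltW.
have IH := hG V t0 t0W t0i.
set a := fun i => b i + tau.
have a0 : forall i, 0 <= a i by move=> i; rewrite /a; apply: addr_ge0.
have HS := G_shift V b tau.
have HGl := G_le V a.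
have HSV : \sum_(j in V) a j <= cost t0.
  apply: le_trans (step_bound hc hst t0W).
  by apply: sum_sub => // i; apply: t0i.
have Htot : cost p <= \sum_i a i.
  rewrite -heq; exact: (sum_sub (P := fun i => p \in A i) (Q := fun _ => true)).
have Esum : \sum_i a i = \sum_i b i + n * tau.
  by rewrite /a big_split /= sum_all_const.
move: hBp; rewrite /costS big_setU1 //= -/(costS cost W) => hBp.
set u := s + tau.
have Bu : B < n * u.
  have : n * u = \sum_i b i + costS cost W + n * tau by rewrite hsum /u; ring.
  lra.
have coh2 : C * n <= v * B.
  have h2 : C / B * (B * n) <= v / n * (B * n).
    by rewrite ler_pM2r // mulr_gt0.
  have e1 : C / B * (B * n) = C * n by field; rewrite gt_eqF.
  have e2 : v / n * (B * n) = v * B by field; rewrite gt_eqF.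
  by rewrite -e1 -e2.
have vB : v * B < v * (n * u) by rewrite ltr_pM2l.
have Cu : C < v * u.
  rewrite -(ltr_pM2r npos).
  have : v * (n * u) = v * u * n by ring.
  lra.
have K0 : 0 <= Kv R A W V by apply: sumr_ge0 => i _; exact: ler0n.
have c0d := dge t0 t0T.
have H1 : v * (v * u) <= 2 * cost t0 * Kv R A W V + v * cost t0.
  have : v * (v * u) = v * (v * s) + v * (v * tau) by rewrite /u; ring.
  have : v * \sum_(j in V) a j <= v * cost t0 by rewrite ler_pM2l.
  move: HGl HS IH; rewrite /a -/v => HGl HS IH.
  lra.
have H2 : 2 * cost t0 * Kv R A W V <= 2 * d * Kv R A W V.
  by apply: ler_wpM2r => //; lra.
have H3 : v * cost t0 <= v * d by rewrite ler_pM2l.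
have H4 : v * C < v * (v * u) by rewrite ltr_pM2l.
have dpos : 0 < d by apply: lt_le_trans (hcost t0) c0d.
have key : (C - d) * v < 2 * d * Kv R A W V.
  have : (C - d) * v = v * C - v * d by ring.
  lra.
have ex : x = (C - d) / (2 * d) by rewrite /x; field; rewrite gt_eqF.
have ea : avg R A W V = Kv R A W V / v by rewrite /avg mulrC.
rewrite ea ex ltr_pdivrMr ?mulr_gt0 // mulrAC ltr_pdivlMr //.
move: key; rewrite -/v.
have : Kv R A W V * (2 * d) = 2 * d * Kv R A W V by ring.
lra.
Qed.
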